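(* Let $r$ be a positive integer such that $r+1$ is a prime that is not a Mersenne prime. Let $N$ be a positive integer and let $q_0,q_1,\ldots,q_N$ be distinct primes with $\operatorname{ord}_{q_n}(r+1)=2^n$ for $1\le n\le N$ and $\operatorname{ord}_{q_0}(r+1)=2^N$. Let $M=\prod_{i=0}^N q_i$, and let $A$ be the set of positive integers $x$ satisfying $x+r\equiv 0\pmod{q_0}$ and $(r+1)^{2^{n-1}}x+r\equiv 0\pmod{q_n}$ for all $n\in\{1,\ldots,N\}$. Let $B=\ell_1^{\beta_1}\cdots\ell_s^{\beta_s}$, where $\ell_1,\ldots,\ell_s$ are distinct primes, each greater than $r$ and congruent to $1$ modulo $M$, and $\beta_1,\ldots,\beta_s$ are positive integers. Let $p>M$ be a prime in $A$ such that $(r+1)^{\alpha}p\in G_r$ for all nonnegative integers $\alpha$, and such that $p-r$ has a prime divisor $P$ with $P\nmid (r+1)B$. Then $(r+1)^{\alpha}Bp\in G_r$ for all nonnegative integers $\alpha$.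
   Context: For a positive integer $r$, the $r$-th Schemmel totient function $S_r:\mathbb{N}\to\mathbb{N}_0$ is the multiplicative arithmetic function (so $S_r(1)=1$ and $S_r(ab)=S_r(a)S_r(b)$ for coprime $a,b$) defined on prime powers by $S_r(p^{\alpha})=0$ if $p\le r$ and $S_r(p^\alpha)=p^{\alpha-1}(p-r)$ if $p>r$, for all primes $p$ and positive integers $\alpha$. $G_r$ denotes the set of positive integers not in the range of $S_r$. $\operatorname{ord}_q(a)$ denotes the multiplicative order of $a$ modulo the prime $q$. *)

(* Defs.v *)
From mathcomp Require Import all_boot.
Set Implicit Arguments. Unset Strict Implicit. Unset Printing Implicit Defensive.

Definition schemmel (r n : nat) : nat :=
  \prod_(p <- primes n) (if p <= r then 0 else p ^ (logn p n).-1 * (p - r)).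

Definition in_Gr (r m : nat) : Prop :=
  0 < m /\ forall n, 0 < n -> schemmel r n <> m.

Definition is_ord (q a k : nat) : Prop :=
  0 < k /\ a ^ k = 1 %[mod q] /\ (forall j, 0 < j < k -> a ^ j <> 1 %[mod q]).

Definition mersenne_prime (p : nat) : Prop :=
  prime p /\ exists k, p = 2 ^ k - 1.

(* Main.v *)
Require Import Defs.
From mathcomp Require Import all_boot.
From mathcomp Require Import zify.

Lemma eqmM a b a' b' d : a = a' %[mod d] -> b = b' %[mod d] -> a * b = a' * b' %[mod d].
Proof. by move=> Ha Hb; rewrite -modnMm Ha Hb modnMm. Qed.
Lemma eqmD a b a' b' d : a = a' %[mod d] -> b = b' %[mod d] -> a + b = a' + b' %[mod d].
Proof. by move=> Ha Hb; rewrite -modnDm Ha Hb modnDm. Qed.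
Lemma eqmX a a' k d : a = a' %[mod d] -> a ^ k = a' ^ k %[mod d].
Proof. by move=> Ha; rewrite -modnXm Ha modnXm. Qed.

Lemma prime_dvd_prod_seq (P : nat) (s : seq nat) (f : nat -> nat) :
  prime P -> P %| \prod_(x <- s) f x -> exists2 x, x \in s & P %| f x.
Proof.
move=> HP; elim: s => [|y s IH].
  by rewrite big_nil dvdn1 => /eqP E; rewrite E in HP.
rewrite big_cons Euclid_dvdM // => /orP [H|H].
  by exists y => //; rewrite inE eqxx.
by have [x Hx Hf] := IH H; exists x => //; rewrite inE Hx orbT.
Qed.

Lemma one_mod (M d : nat) : 0 < d ->
  (forall pr, prime pr -> pr %| d -> pr = 1 %[mod M]) -> d = 1 %[mod M].
Proof.
elim: d {-2}d (leqnn d) => [|n IH] d Hd d0 H.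
  by rewrite leqn0 in Hd; rewrite (eqP Hd) in d0.
case: (ltnP 1 d) => d1; last first.
  by have -> : d = 1 by lia.
have Hp := pdiv_prime d1.
have Hdv := pdiv_dvd d.
rewrite -(divnK Hdv).
apply: (@eqmM _ _ 1 1); last exact: H.
apply: IH.
- have := ltn_Pdiv (prime_gt1 Hp) d0. lia.
- rewrite divn_gt0 ?prime_gt0 //; exact: dvdn_leq.
- move=> pr Hpr Hd'; apply: H => //; apply: dvdn_trans Hd' _; exact: dvdn_div.
Qed.

Lemma cover (r N : nat) (q : nat -> nat) (p c a : nat) :
 (forall n, 1 <= n <= N -> r.+1 ^ (2 ^ n) = 1 %[mod q n]) ->
 r.+1 ^ (2 ^ N) = 1 %[mod q 0] ->
 p + r = 0 %[mod q 0] ->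
 (forall n, 1 <= n <= N -> r.+1 ^ (2 ^ n.-1) * p + r = 0 %[mod q n]) ->
 (forall i, i <= N -> c = 1 %[mod q i]) ->
 exists2 i, i <= N & q i %| c * r.+1 ^ a * p + r.
Proof.
move=> Hord Hord0 HA0 HA Hc.
case: (boolP (2 ^ N %| a)) => H2.
  exists 0 => //; apply/eqP.
  have -> : c * r.+1 ^ a * p + r = 1 * 1 * p + r %[mod q 0].
    apply: eqmD => //; apply: eqmM => //; apply: eqmM; first exact: Hc.
    rewrite -(divnK H2) mulnC expnM.
    by rewrite -modnXm Hord0 modnXm exp1n.
  by rewrite !mul1n HA0 mod0n.
have a0 : 0 < a by case: a H2 => [|a]; rewrite ?dvdn0.
have [c' Hc' Ha] := pfactor_coprime (isT : prime 2) a0.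
set v := logn 2 a in Ha.
have vN : v < N.
  rewrite ltnNge; apply/negP => Hv; move/negP: H2; apply.
  rewrite Ha; apply: dvdn_mull; exact: dvdn_exp2l.
rewrite coprime2n in Hc'.
have Ha' : a = 2 ^ v + (c'./2) * 2 ^ v.+1.
  have := odd_double_half c'; rewrite Hc' expnS => E.
  rewrite Ha -{1}E -mul2n; lia.
exists v.+1 => //.
apply/eqP.
have -> : c * r.+1 ^ a * p + r = 1 * (r.+1 ^ (2 ^ v) * 1) * p + r %[mod q v.+1].
  apply: eqmD => //; apply: eqmM => //; apply: eqmM; first exact: Hc.
  rewrite Ha' expnD; apply: eqmM => //.
  rewrite mulnC expnM -modnXm Hord ?modnXm ?exp1n //; lia.
rewrite mul1n muln1; have := HA v.+1; move=> /= -> ; [by rewrite mod0n | lia].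
Qed.
Theorem theorem2p2 (r N : nat) (q : nat -> nat) (M : nat)
  (A : nat -> Prop) (ls : seq nat) (beta : nat -> nat) (B p : nat) :
  0 < r -> prime r.+1 -> ~ mersenne_prime r.+1 ->
  0 < N ->
  (forall i, i <= N -> prime (q i)) ->
  (forall i j, i <= N -> j <= N -> q i = q j -> i = j) ->
  (forall n, 1 <= n <= N -> is_ord (q n) r.+1 (2 ^ n)) ->
  is_ord (q 0) r.+1 (2 ^ N) ->
  M = \prod_(0 <= i < N.+1) q i ->
  (forall x, A x <-> 0 < x /\ x + r = 0 %[mod q 0] /\
     (forall n, 1 <= n <= N -> r.+1 ^ (2 ^ n.-1) * x + r = 0 %[mod q n])) ->
  uniq ls ->
  (forall l, l \in ls -> [/\ prime l, r < l & l = 1 %[mod M]]) ->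
  (forall l, l \in ls -> 0 < beta l) ->
  B = \prod_(l <- ls) l ^ beta l ->
  prime p -> M < p -> A p ->
  (forall alpha, in_Gr r (r.+1 ^ alpha * p)) ->
  (exists P, [/\ prime P, P %| (p - r) + (r - p) & ~~ (P %| r.+1 * B)]) ->
  forall alpha, in_Gr r (r.+1 ^ alpha * B * p).
Proof.
move=> r0 pr1 _ N0 Hq _ Hord Hord0 HM HA _ Hls _ HB Hp HMp Ap _ [P [HP HPd HPn]] alpha.
have [p0 [HA0 HAn]] := (HA p).1 Ap.
have B0 : 0 < B.
  rewrite HB big_seq_cond; apply: prodn_cond_gt0 => l /andP [Hl _].
  by have [lp _ _] := Hls l Hl; rewrite expn_gt0 prime_gt0.
have m0 : 0 < r.+1 ^ alpha * B * p by rewrite !muln_gt0 expn_gt0 B0 prime_gt0.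
split => // n n0 Hs.
have Hfac : forall t, t \in primes n -> r < t /\ (t - r) %| r.+1 ^ alpha * B * p.
  move=> t Ht; move: Hs; rewrite /schemmel (big_rem t Ht) /=.
  case: ifP => [_ E|gt E]; first by rewrite -E in m0.
  split; first by rewrite ltnNge gt.
  by rewrite -E; apply: dvdn_mulr; apply: dvdn_mull.
have qM : forall i, i <= N -> q i %| M.
  move=> i iN; rewrite HM (big_rem i) ?mem_index_iota //=; exact: dvdn_mulr.
have M0 : 0 < M.
  rewrite HM big_seq_cond; apply: prodn_cond_gt0 => i /andP [Hi _].
  rewrite mem_index_iota in Hi; apply: prime_gt0; apply: Hq; lia.
have pm : p %| schemmel r n by rewrite Hs; apply: dvdn_mull.
have [t Ht Hpt] := @prime_dvd_prod_seq p _ _ Hp pm.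
have [rt dt] := Hfac t Ht.
move: (Ht); rewrite mem_primes => /and3P [tpr _ tn].
rewrite leqNgt rt /= Euclid_dvdM // in Hpt.
case/orP: Hpt => Hpt.
  rewrite Euclid_dvdX // in Hpt; case/andP: Hpt => Hpt _.
  rewrite dvdn_prime2 // in Hpt; move/eqP: Hpt => Ept; subst t.
  have E0 : r - p = 0 by apply/eqP; rewrite subn_eq0 ltnW.
  rewrite E0 addn0 in HPd.
  have := dvdn_trans HPd dt; rewrite !Euclid_dvdM //.
  case/orP => [/orP [H|H]|H].
  - rewrite Euclid_dvdX // in H; case/andP: H => H _.
    by move/negP: HPn; apply; apply: dvdn_mulr.
  - by move/negP: HPn; apply; apply: dvdn_mull.
  - rewrite dvdn_prime2 // in H; move/eqP: H => H; subst P.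
    have H0 : 0 < p - r by rewrite subn_gt0. have := dvdn_leq H0 HPd; by rewrite leqNgt ltn_subrL r0 prime_gt0.
set k := (t - r) %/ p.
have Etk : t - r = k * p by rewrite divnK.
have k0 : 0 < k by rewrite lt0n; apply/eqP => k0'; move: Etk; rewrite k0' mul0n => /eqP; rewrite subn_eq0 leqNgt rt.
have kd : k %| r.+1 ^ alpha * B.
  by rewrite -(dvdn_pmul2r (prime_gt0 Hp)) -Etk.
have [c Hc Hk] := pfactor_coprime pr1 k0.
have cB : c %| B.
  rewrite -(@Gauss_dvdr c (r.+1 ^ alpha)); last by rewrite coprimeXr // coprime_sym.
  apply: dvdn_trans kd; rewrite Hk; exact: dvdn_mulr.
have c0 : 0 < c by move: k0; rewrite Hk; case: (c).
have c1 : c = 1 %[mod M].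
  apply: one_mod => // pr Hpr Hprc.
  have := dvdn_trans Hprc cB; rewrite HB => H.
  have [l Hl Hpl] := @prime_dvd_prod_seq pr _ _ Hpr H.
  have [lpr _ l1] := Hls l Hl.
  rewrite Euclid_dvdX // dvdn_prime2 // in Hpl.
  by case/andP: Hpl => /eqP -> _.
have Et : t = c * r.+1 ^ logn r.+1 k * p + r by rewrite -Hk -Etk subnK // ltnW.
have Hc1 : forall i, i <= N -> c = 1 %[mod q i].
  by move=> i iN; rewrite -(modn_dvdm c (qM i iN)) c1 (modn_dvdm 1 (qM i iN)).
have [i iN Hi] := @cover r N q p c (logn r.+1 k)
  (fun n Hn => (Hord n Hn).2.1) Hord0.2.1 HA0 HAn Hc1.
rewrite -Et dvdn_prime2 ?Hq // in Hi.
move/eqP: Hi => Hi.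
have pt : p <= t.
  rewrite -(subnK (ltnW rt)) Etk; apply: (leq_trans _ (leq_addr r _)).
  by rewrite leq_pmull.
have := dvdn_leq M0 (qM i iN); rewrite Hi => tM.
by have := leq_trans pt tM; rewrite leqNgt HMp.
Qed.
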